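(* Let $R$ be a commutative Noetherian ring of prime characteristic $p$, let $b\in\mathbb{N}$, let $W=\bigoplus_{n\geq b}W_n$ be a $\mathbb{Z}$-graded left $R[x,f]$-module (with $W_n=0$ for $n<b$), and let $M$ be an $R$-module generated by the finite set $\{m_1,\ldots,m_t\}$. Suppose given a homogeneous (degree $0$) $R[x,f]$-homomorphism $\lambda'=\bigoplus_{i\geq b}\lambda_i:\bigoplus_{i\geq b}(Rx^i\otimes_RM)\to W$. For $j=1,\ldots,t$ let $g_j:=\lambda_b(x^b\otimes m_j)\in W_b$, and let $K:=\{(r_1,\ldots,r_t)\in R^t:\sum_{j=1}^t r_jg_j=0\}$. Then for each $i=0,1,\ldots,b-1$ there is an $R$-homomorphism $\lambda_i:Rx^i\otimes_RM\to R^t/f^{-(b-i)}(K)$ with $\lambda_i\left(\sum_{j=1}^t r_jx^i\otimes m_j\right)=(r_1,\ldots,r_t)+f^{-(b-i)}(K)$ for all $r_1,\ldots,r_t\in R$; and $\lambda:=\bigoplus_{i\in\mathbb{N}_0}\lambda_i:R[x,f]\otimes_RM=\bigoplus_{i\in\mathbb{N}_0}(Rx^i\otimes_RM)\to\operatorname{ext}(W;g_1,\ldots,g_t;b)$ is a homogeneous $R[x,f]$-homomorphism extending $\lambda'$.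
   Context: $R[x,f]$ denotes the Frobenius skew polynomial ring over $R$: as a left $R$-module it is free on $(x^i)_{i\in\mathbb{N}_0}$, with multiplication subject to $xr = r^px$; it is graded with $n$th component $Rx^n$, regarded as an $(R,R)$-bimodule (so $rx^i\cdot s=rs^{p^i}x^i$). $R[x,f]\otimes_RM=\bigoplus_{i}(Rx^i\otimes_RM)$ is a graded left $R[x,f]$-module. $f:R^t\to R^t$ is the Frobenius map $(r_1,\ldots,r_t)\mapsto(r_1^p,\ldots,r_t^p)$, and $f^{-j}(K)=\{v\in R^t: f^j(v)\in K\}$. The $b$-place extension $\operatorname{ext}(W;g_1,\ldots,g_t;b)$ is the graded left $R[x,f]$-module whose component in degree $b-j$ is $R^t/f^{-j}(K)$ for $j=1,\ldots,b$ and whose component in degree $n\ge b$ is $W_n$, which contains $W$ as an $R[x,f]$-submodule, and in which $x(v+f^{-j}(K))=f(v)+f^{-(j-1)}(K)$ for $v\in R^t$ and $2\le j\le b$, and $x((r_1,\ldots,r_t)+f^{-1}(K))=\sum_{i=1}^t r_i^pg_i$. *)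

(* Defs.v *)
From HB Require Import structures.
From mathcomp Require Import all_boot all_order all_algebra.
Set Implicit Arguments. Unset Strict Implicit. Unset Printing Implicit Defensive.
Import GRing.Theory.
Local Open Scope ring_scope.

Definition is_ideal (R : comNzRingType) (I : R -> Prop) : Prop :=
  [/\ I 0, (forall a b, I a -> I b -> I (a + b)) & (forall r a, I a -> I (r * a))].

Definition noetherian (R : comNzRingType) : Prop :=
  forall I : nat -> R -> Prop, (forall n, is_ideal (I n)) ->
  (forall n a, I n a -> I n.+1 a) ->
  exists N, forall n a, (N <= n)%N -> I n a -> I N a.

Definition is_additive (U V : zmodType) (f : U -> V) : Prop :=
  forall u v, f (u + v) = f u + f v.

Definition rlinear (R : comNzRingType) (U V : lmodType R) (f : U -> V) : Prop :=
  forall a u v, f (a *: u + v) = a *: f u + f v.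

Definition frob_semilinear (R : comNzRingType) (p e : nat) (U V : lmodType R)
  (f : U -> V) : Prop :=
  is_additive f /\ forall s u, f (s *: u) = s ^+ (p ^ e)%N *: f u.

Definition frobv (R : comNzRingType) (p e t : nat) (v : 'rV[R]_t) : 'rV[R]_t :=
  \row_k (v 0 k) ^+ (p ^ e)%N.

(* (T, iota) is the tensor product  R x^e (x)_R M, iota m = x^e (x) m,
   characterised by its universal property: R-linear maps out of it correspond
   to additive maps phi : M -> X with phi (s m) = s^(p^e) phi m. *)
Definition is_frob_tensor (R : comNzRingType) (p e : nat) (M T : lmodType R)
  (iota : M -> T) : Prop :=
  frob_semilinear p e iota /\
  forall (X : lmodType R) (phi : M -> X), frob_semilinear p e phi ->
  exists psi : T -> X,
    [/\ rlinear psi, (forall m, psi (iota m) = phi m) &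
        forall psi' : T -> X, rlinear psi' -> (forall m, psi' (iota m) = phi m) ->
          forall u, psi' u = psi u].

(* A (N_0-indexed) graded left R[x,f]-module: R-modules W n with the action
   of x given by maps W n -> W n.+1 satisfying x (r w) = r^p x w. *)
Definition graded_Rxf_module (R : comNzRingType) (p : nat) (W : nat -> lmodType R)
  (xW : forall n, W n -> W n.+1) : Prop :=
  forall n, frob_semilinear p 1 (xW n).

(* (T, xT, iota) is the graded R[x,f]-module R[x,f] (x)_R M, with
   T n = R x^n (x)_R M, iota n m = x^n (x) m, and x (r x^n (x) m) = r^p x^(n+1) (x) m. *)
Definition Rxf_tensor_model (R : comNzRingType) (p : nat) (M : lmodType R)
  (T : nat -> lmodType R) (iota : forall n, M -> T n)
  (xT : forall n, T n -> T n.+1) : Prop :=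
  [/\ forall n, is_frob_tensor p n (iota n),
      graded_Rxf_module p xT &
      forall n r m, xT n (r *: iota n m) = r ^+ p *: iota n.+1 m].

(* (E, xE) is the b-place extension ext(W; g_1..g_t; b):
   for n < b, E n = R^t / f^{-(b-n)}(K) via the surjection pi n with that kernel,
   where K = {r | sum r_j g_j = 0};
   for n >= b, E n = W n via the isomorphism emb n (W is a submodule);
   x acts as in the definition of ext. *)
Definition is_ext_model (R : comNzRingType) (p b t : nat) (W : nat -> lmodType R)
  (xW : forall n, W n -> W n.+1) (g : 'I_t -> W b)
  (E : nat -> lmodType R) (xE : forall n, E n -> E n.+1)
  (pi : forall n, 'rV[R]_t -> E n) (emb : forall n, W n -> E n) : Prop :=
  let K := fun v : 'rV[R]_t => \sum_(k < t) v 0 k *: g k = 0 in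
  graded_Rxf_module p xE /\
  [/\ (forall n, (n < b)%N ->
         [/\ rlinear (pi n), (forall e, exists v, pi n v = e) &
             forall v, pi n v = 0 <-> K (frobv p (b - n) v)]),
      (forall n, (b <= n)%N -> rlinear (emb n) /\ bijective (emb n)),
      (forall n w, (b <= n)%N -> xE n (emb n w) = emb n.+1 (xW n w)),
      (forall n v, (n.+1 < b)%N -> xE n (pi n v) = pi n.+1 (frobv p 1 v)) &
      match b return ('I_t -> W b) -> Prop with
      | 0 => fun _ => True
      | b'.+1 => fun g => forall v,
          xE b' (pi b' v) = emb b'.+1 (\sum_(k < t) (v 0 k) ^+ p *: g k)
      end g].

(* Main.v *)
Require Import Defs.
From HB Require Import structures.
From mathcomp Require Import all_boot all_order all_algebra.
From Stdlib Require Import ClassicalEpsilon.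
Import GRing.Theory.
Local Open Scope ring_scope.

Section Tw.
Variables (R : comNzRingType) (p : nat) (chRp : p \in [pchar R]) (V : lmodType R).
Definition tw (_ : p \in [pchar R]) : Type := V.
HB.instance Definition _ := GRing.Zmodule.on (tw chRp).
Definition tw_scale (r : R) (v : tw chRp) : tw chRp := (r ^+ p) *: (v : V).
Lemma pnat_p : [pchar R].-nat p.
Proof. by rewrite pnatE ?(pcharf_prime chRp). Qed.
Lemma tw_scalerA a b v : tw_scale a (tw_scale b v) = tw_scale (a * b) v.
Proof. by rewrite /tw_scale scalerA exprMn. Qed.
Lemma tw_scale1 : left_id 1 tw_scale.
Proof. by move=> v; rewrite /tw_scale expr1n scale1r. Qed.
Lemma tw_scaleDr : right_distributive tw_scale +%R.
Proof. by move=> a u v; rewrite /tw_scale scalerDr. Qed.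
Lemma tw_scaleDl v : {morph tw_scale^~ v : a b / a + b}.
Proof. by move=> a b; rewrite /tw_scale exprDn_pchar ?pnat_p // scalerDl. Qed.
HB.instance Definition _ := GRing.Zmodule_isLmodule.Build R (tw chRp) tw_scalerA tw_scale1 tw_scaleDr tw_scaleDl.
End Tw.

Section Gen.
Set Implicit Arguments.
Variables (R : comNzRingType) (p : nat) (chRp : p \in [pchar R]).

Lemma pnat_pe (e : nat) : [pchar R].-nat (p ^ e)%N.
Proof. by rewrite pnatX (@pnat_p R p chRp). Qed.

Lemma frobD (e : nat) (x y : R) : (x + y) ^+ (p ^ e)%N = x ^+ (p ^ e)%N + y ^+ (p ^ e)%N.
Proof. by rewrite exprDn_pchar ?pnat_pe. Qed.
Lemma frobN (e : nat) (x : R) : (- x) ^+ (p ^ e)%N = - x ^+ (p ^ e)%N.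
Proof. by rewrite exprNn_pchar ?pnat_pe. Qed.
Lemma frobB (e : nat) (x y : R) : (x - y) ^+ (p ^ e)%N = x ^+ (p ^ e)%N - y ^+ (p ^ e)%N.
Proof. by rewrite frobD frobN. Qed.

Lemma rlin0 (U V : lmodType R) (f : U -> V) : rlinear f -> f 0 = 0.
Proof.
move=> H; have h := H 1 0 0; rewrite !scale1r addr0 in h.
by apply: (addrI (f 0)); rewrite addr0 -h.
Qed.
Lemma rlinD (U V : lmodType R) (f : U -> V) : rlinear f -> forall u v, f (u + v) = f u + f v.
Proof. by move=> H u v; have := H 1 u v; rewrite !scale1r. Qed.
Lemma rlinZ (U V : lmodType R) (f : U -> V) : rlinear f -> forall a u, f (a *: u) = a *: f u.
Proof. by move=> H a u; have := H a u 0; rewrite (rlin0 H) !addr0. Qed.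
Lemma rlinB (U V : lmodType R) (f : U -> V) : rlinear f -> forall u v, f (u - v) = f u - f v.
Proof. by move=> H u v; have := H (-1) v u; rewrite !scaleN1r addrC => ->; rewrite addrC. Qed.
Lemma rlin_sum (U V : lmodType R) (f : U -> V) t (r : 'I_t -> R) (u : 'I_t -> U) :
  rlinear f -> f (\sum_(j < t) r j *: u j) = \sum_(j < t) r j *: f (u j).
Proof.
move=> H; apply: (big_ind2 (fun x y => f x = y)); first exact: rlin0.
  by move=> x1 x2 y1 y2 <- <-; rewrite rlinD.
by move=> i _; rewrite rlinZ.
Qed.
Lemma semi0 (e : nat) (U V : lmodType R) (f : U -> V) : frob_semilinear p e f -> f 0 = 0.
Proof.
case=> H _; have h := H 0 0; rewrite addr0 in h.
by apply: (addrI (f 0)); rewrite addr0 -h.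
Qed.
Lemma semi_sum (e : nat) (U V : lmodType R) (f : U -> V) t (r : 'I_t -> R) (u : 'I_t -> U) :
  frob_semilinear p e f -> f (\sum_(j < t) r j *: u j) = \sum_(j < t) r j ^+ (p ^ e)%N *: f (u j).
Proof.
move=> H; apply: (big_ind2 (fun x y => f x = y)); first exact: semi0 H.
  by move=> x1 x2 y1 y2 <- <-; rewrite H.1.
by move=> i _; rewrite H.2.
Qed.
Lemma semi_lin (e : nat) (U V X : lmodType R) (f : U -> V) (g : V -> X) :
  frob_semilinear p e f -> rlinear g -> frob_semilinear p e (fun u => g (f u)).
Proof.
move=> [fa fs] gl; split; first by move=> u v; rewrite fa rlinD.
by move=> s u; rewrite fs rlinZ.
Qed.
Lemma lin_semi (e : nat) (U V X : lmodType R) (f : U -> V) (g : V -> X) :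
  rlinear f -> frob_semilinear p e g -> frob_semilinear p e (fun u => g (f u)).
Proof.
move=> fl [ga gs]; split; first by move=> u v; rewrite rlinD // ga.
by move=> s u; rewrite rlinZ // gs.
Qed.
Lemma lin_lin (U V X : lmodType R) (f : U -> V) (g : V -> X) :
  rlinear f -> rlinear g -> rlinear (fun u => g (f u)).
Proof. by move=> fl gl a u v; rewrite fl gl. Qed.

Lemma semi_unique (e : nat) (M T V : lmodType R) (iota : M -> T) (f g : T -> V) :
  is_frob_tensor p e iota -> frob_semilinear p 1 f -> frob_semilinear p 1 g ->
  (forall m, f (iota m) = g (iota m)) -> forall u, f u = g u.
Proof.
case=> [[iadd isc] Hu] [fadd fsc] [gadd gsc] fg u.
pose X := @tw R p V chRp.
pose phi : M -> X := fun m => f (iota m).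
have phis : frob_semilinear p e phi.
  split; first by move=> a b; rewrite /phi iadd fadd.
  by move=> s a; rewrite /phi isc fsc expn1.
have [psi [_ _ uniq]] := Hu X phi phis.
have lf : rlinear (f : T -> X).
  by move=> a x y; rewrite fadd fsc expn1.
have lg : rlinear (g : T -> X).
  by move=> a x y; rewrite gadd gsc expn1.
rewrite (uniq f lf (fun _ => erefl)) (uniq g lg) // => mm; by rewrite -fg.
Qed.
End Gen.

Theorem proposition2p11 (R : comNzRingType) (p b t : nat)
  (M : lmodType R) (m : 'I_t -> M)
  (W : nat -> lmodType R) (xW : forall n, W n -> W n.+1)
  (T : nat -> lmodType R) (iota : forall n, M -> T n)
  (xT : forall n, T n -> T n.+1)
  (lam' : forall n, T n -> W n)
  (E : nat -> lmodType R) (xE : forall n, E n -> E n.+1)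
  (pi : forall n, 'rV[R]_t -> E n) (emb : forall n, W n -> E n) :
  noetherian R ->
  p \in [pchar R] ->
  graded_Rxf_module p xW ->
  (forall n, (n < b)%N -> forall w : W n, w = 0) ->
  (forall u : M, exists r : 'I_t -> R, u = \sum_(j < t) r j *: m j) ->
  Rxf_tensor_model p iota xT ->
  (forall n, (b <= n)%N -> rlinear (lam' n)) ->
  (forall n u, (b <= n)%N -> lam' n.+1 (xT n u) = xW n (lam' n u)) ->
  is_ext_model p xW (fun j => lam' b (iota b (m j))) xE pi emb ->
  exists lam : forall n, T n -> E n,
    [/\ forall n, rlinear (lam n),
        forall n, (n < b)%N -> forall r : 'rV[R]_t,
          lam n (\sum_(j < t) r 0 j *: iota n (m j)) = pi n r,
        forall n u, (b <= n)%N -> lam n u = emb n (lam' n u) &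
        forall n u, lam n.+1 (xT n u) = xE n (lam n u)].
Proof.
move=> _ chRp _ _ Hgen [Htens HxT HxTi] Hlam' Hcomm Hext.
have [HxE [Hpi Hemb HxEemb HxEpi Hlast]] := Hext.
have rep : forall u : M, {c : 'rV[R]_t | u = \sum_(j < t) c 0 j *: m j}.
  move=> u; apply: constructive_indefinite_description.
  have [r ->] := Hgen u; exists (\row_j r j).
  by apply: eq_bigr => j _; rewrite mxE.
have frobvD : forall e (c d : 'rV[R]_t), frobv p e (c + d) = frobv p e c + frobv p e d.
  by move=> e c d; apply/rowP => k; rewrite !mxE (@frobD _ _ chRp).
have frobvZ : forall e s (c : 'rV[R]_t), frobv p e (s *: c) = s ^+ (p ^ e)%N *: frobv p e c.
  by move=> e s c; apply/rowP => k; rewrite !mxE exprMn.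
have sumB : forall c d : 'rV[R]_t, \sum_(j < t) c 0 j *: m j - \sum_(j < t) d 0 j *: m j
    = \sum_(j < t) (c - d) 0 j *: m j.
  move=> c d; rewrite -sumrB; apply: eq_bigr => j _; by rewrite !mxE scalerBl.
have key : forall c : 'rV[R]_t,
    \sum_(k < t) (c 0 k) ^+ (p ^ b)%N *: lam' b (iota b (m k)) =
    lam' b (iota b (\sum_(k < t) c 0 k *: m k)).
  move=> c; rewrite (semi_sum _ _ (Htens b).1) rlin_sum //; exact: Hlam'.
have WD : forall n, (n < b)%N -> forall c d : 'rV[R]_t,
    \sum_(j < t) c 0 j *: m j = \sum_(j < t) d 0 j *: m j ->
    pi n (frobv p n c) = pi n (frobv p n d).
  move=> n hn c d hcd; have [pl _ pker] := Hpi n hn.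
  apply/eqP; rewrite -subr_eq0 -(rlinB pl); apply/eqP/pker.
  have -> : frobv p (b - n) (frobv p n c - frobv p n d) = frobv p b (c - d).
    apply/rowP => k; rewrite !mxE (@frobB _ _ chRp b) (@frobB _ _ chRp (b - n)) -!exprM -expnD subnKC // ltnW //.
  rewrite (eq_bigr (fun k => ((c - d) 0 k) ^+ (p ^ b)%N *: lam' b (iota b (m k)))); last first.
    by move=> k _; rewrite mxE.
  rewrite key -sumB hcd subrr (semi0 (Htens b).1) (rlin0 (Hlam' b (leqnn b))) //.
pose phi n (u : M) := pi n (frobv p n (sval (rep u))).
have phi_rep : forall n, (n < b)%N -> forall (c : 'rV[R]_t) u,
    u = \sum_(j < t) c 0 j *: m j -> phi n u = pi n (frobv p n c).
  move=> n hn c u hu; rewrite /phi; apply: WD => //.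
  by rewrite -hu; case: (rep u).
have phi_semi : forall n, (n < b)%N -> frob_semilinear p n (phi n).
  move=> n hn; have [pl _ _] := Hpi n hn; split.
    move=> u v; rewrite (phi_rep n hn (sval (rep u) + sval (rep v))).
      by rewrite frobvD (rlinD pl) /phi.
    rewrite {1}(svalP (rep u)) {1}(svalP (rep v)).
    by rewrite -big_split; apply: eq_bigr => j _; rewrite mxE scalerDl.
  move=> s u; rewrite (phi_rep n hn (s *: sval (rep u))).
    by rewrite frobvZ (rlinZ pl).
  rewrite {1}(svalP (rep u)) scaler_sumr; apply: eq_bigr => j _.
  by rewrite mxE scalerA.
have Hpsi : forall n, {psi : T n -> E n | (n < b)%N ->
    rlinear psi /\ forall mm, psi (iota n mm) = phi n mm}.
  move=> n; case: (ltnP n b) => hn; last by exists (fun _ => 0).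
  apply: constructive_indefinite_description.
  have [psi [H1 H2 _]] := (Htens n).2 _ _ (phi_semi n hn).
  by exists psi.
pose lam n : T n -> E n :=
  if (n < b)%N then sval (Hpsi n) else fun u => emb n (lam' n u).
have lamlt : forall n, (n < b)%N -> lam n = sval (Hpsi n).
  move=> n hn; rewrite /lam.
  have ifT' : forall (A : Type) (c : bool) (x y : A), c -> (if c then x else y) = x by move=> A [].
  exact: ifT' hn.
have lamge : forall n, (b <= n)%N -> lam n = fun u => emb n (lam' n u).
  move=> n hn; rewrite /lam.
  have ifF' : forall (A : Type) (c : bool) (x y : A), ~~ c -> (if c then x else y) = y by move=> A [].
  by apply: ifF'; rewrite -leqNgt.
have lamlin : forall n, rlinear (lam n).
  move=> n; case: (ltnP n b) => hn.
    by rewrite lamlt //; exact: (proj1 (svalP (Hpsi n) hn)).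
  rewrite lamge //; apply: lin_lin; first exact: Hlam'.
  by have [] := Hemb n hn.
have phim : forall n, (n < b)%N -> forall mm (c : 'rV[R]_t), mm = \sum_(j < t) c 0 j *: m j ->
    lam n (iota n mm) = pi n (frobv p n c).
  move=> n hn mm c hc; rewrite lamlt // (proj2 (svalP (Hpsi n) hn)).
  exact: phi_rep.
have xTi : forall n mm, xT n (iota n mm) = iota n.+1 mm.
  by move=> n mm; have := HxTi n 1 mm; rewrite !scale1r expr1n scale1r.
exists lam; split => //.
- move=> n hn r; have [pl _ _] := Hpi n hn; rewrite (rlin_sum _ _ (lamlin n)).
  rewrite {2}(row_sum_delta r) (rlin_sum _ _ pl).
  apply: eq_bigr => j _; congr (_ *: _).
  rewrite (phim n hn (m j) (delta_mx 0 j)).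
    congr (pi n _); apply/rowP => k; rewrite !mxE.
    case: (_ && _) => /=; first by rewrite expr1n.
    by rewrite expr0n expn_eq0 eqn0Ngt (prime_gt0 (pcharf_prime chRp)).
  rewrite (bigD1 j) //= big1 => [|k hk]; first by rewrite !mxE !eqxx scale1r addr0.
  by rewrite mxE (negbTE hk) andbF scale0r.
- by move=> n u hn; rewrite lamge.
- move=> n u; case: (ltngtP n.+1 b) => hn.
  + refine (semi_unique chRp (Htens n) (f := fun u => lam n.+1 (xT n u))
        (g := fun u => xE n (lam n u)) _ _ _ u).
    * exact: semi_lin (HxT n) (lamlin n.+1).
    * exact: lin_semi (lamlin n) (HxE n).
    * move=> mm /=; rewrite xTi; have hc := svalP (rep mm).
      rewrite (phim n.+1 hn mm _ hc) (phim n (ltnW hn) mm _ hc) HxEpi //.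
      by congr (pi _ _); apply/rowP => k; rewrite !mxE -exprM expn1 expnSr.
  + by rewrite (lamge n.+1 (leqW hn)) (lamge n hn) /= Hcomm // HxEemb.
  + subst b; rewrite (lamge n.+1 (leqnn _)) /=.
    refine (semi_unique chRp (Htens n) (f := fun u => emb n.+1 (lam' n.+1 (xT n u)))
        (g := fun u => xE n (lam n u)) _ _ _ u).
    * exact: semi_lin (semi_lin (HxT n) (Hlam' _ (leqnn _))) (Hemb _ (leqnn _)).1.
    * exact: lin_semi (lamlin n) (HxE n).
    * move=> mm /=; rewrite xTi; have hc := svalP (rep mm).
      rewrite (phim n (ltnSn n) mm _ hc) Hlast; congr (emb _ _).
      rewrite {1}hc -key; apply: eq_bigr => k _.
      by rewrite !mxE -exprM -expnSr.
Qed.
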